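(* Let $\mathbb{M}$ be a monster model of $T_{\mathrm{Ham}}$ with underlying set $G_\infty$, and let $I=I_1+(c)+I_2$ be an ordered index set with $I_1,I_2$ infinite. Let $(a_i)_{i\in I}$ be a nonconstant indiscernible sequence from $G$, and let $(b,b')\in G\times v(G)$ be such that $(a_i)_{i\in I_1+I_2}$ is $bb'$-indiscernible. If $v(a_i-b)=b'$ for all $i\neq c$, then $v(a_c-b)=b'$.
   Context: Let $C$ be an ordered field. A Hamel space over $C$ is a $C$-vector space $G$ with two total orderings $<_0,<_1$, each making $G$ an ordered $C$-vector space, and a map $v:G\to G_\infty=G\cup\{\infty\}$ ($G<_0\infty$, $G<_1\infty$) such that for all $x,y\in G$, $\lambda\in C^{\times}$: $v(x)=\infty$ iff $x=0$; $v(x+y)\ge_0\min_0(v(x),v(y))$; $v(\lambda x)=v(x)$; $0<_1x<_1y\Rightarrow v(x)\ge_0v(y)$; $v(v(x))=v(x)$ (with $v(\infty)=\infty$); $v(x)>_10$. It is independent if for all $a_0<_0b_0$, $a_1<_1b_1$ in $G\cup\{\pm\infty\}$ some $z\in G$ has $a_0<_0z<_0b_0$, $a_1<_1z<_1b_1$; dense if for all $a<_0b$ in $G$ some $c$ has $a<_0v(c)<_0b$. $T_{\mathrm{Ham}}$ is the complete theory in the language $\{0,+,(\lambda_c)_{c\in C},<_0,<_1,v,\infty\}$ on universe $G_\infty$ (with $\infty$ absorbing for $+$, $\lambda_c$, $v$) whose models are exactly the independent dense Hamel spaces over $C$. Indiscernible means $\emptyset$-indiscernible; $bb'$-indiscernible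 means indiscernible over $\{b,b'\}$. *)

(* Defs.v *)
From HB Require Import structures.
From mathcomp Require Import all_boot all_order all_algebra.
Set Implicit Arguments. Unset Strict Implicit. Unset Printing Implicit Defensive.
Import Order.TTheory GRing.Theory Num.Theory.
Local Open Scope ring_scope.

Section Hamel.
Variables (C : realFieldType) (G : lmodType C).

(* G_infty = option G, with None = infinity (the top element for both orders). *)

Definition ext_lt (lt : rel G) (x y : option G) : bool :=
  match x, y with
  | Some x, Some y => lt x y
  | Some _, None => true
  | None, _ => false
  end.
Definition ext_le (lt : rel G) (x y : option G) : bool := (x == y) || ext_lt lt x y.

Definition ordered_vspace (lt : rel G) : Prop :=
  [/\ forall x, ~~ lt x x,
      forall x y z, lt x y -> lt y z -> lt x z,
      forall x y, x != y -> lt x y || lt y x,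
      forall x y z, lt x y -> lt (x + z) (y + z)
    & forall (l : C) x, 0 < l -> lt 0 x -> lt 0 (l *: x)].

Variables (lt0 lt1 : rel G) (v : G -> option G).

Definition vinf (x : option G) : option G :=
  match x with Some g => v g | None => None end.

Definition hamel_space : Prop :=
  ordered_vspace lt0 /\ ordered_vspace lt1 /\
  (forall x, v x = None <-> x = 0) /\
  (forall x y, ext_le lt0 (v x) (v (x + y)) || ext_le lt0 (v y) (v (x + y))) /\
  (forall (l : C) x, l != 0 -> v (l *: x) = v x) /\
  (forall x y, lt1 0 x -> lt1 x y -> ext_le lt0 (v y) (v x)) /\
  (forall x, vinf (v x) = v x) /\
  (forall x, ext_lt lt1 (Some 0) (v x)).

(* bounds in G U {-oo,+oo}: lower bound None = -oo, upper bound None = +oo *)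
Definition bnd_lt (lt : rel G) (lo hi : option G) : bool :=
  match lo, hi with Some a, Some b => lt a b | _, _ => true end.
Definition above (lt : rel G) (lo : option G) (z : G) : bool :=
  match lo with Some a => lt a z | None => true end.
Definition below (lt : rel G) (hi : option G) (z : G) : bool :=
  match hi with Some b => lt z b | None => true end.

Definition independent : Prop :=
  forall a0 b0 a1 b1 : option G,
    bnd_lt lt0 a0 b0 -> bnd_lt lt1 a1 b1 ->
    exists z : G, [&& above lt0 a0 z, below lt0 b0 z, above lt1 a1 z & below lt1 b1 z].

Definition dense : Prop :=
  forall a b : G, lt0 a b ->
    exists c : G, ext_lt lt0 (Some a) (v c) && ext_lt lt0 (v c) (Some b).

Definition ham_model : Prop := [/\ hamel_space, independent & dense].

Inductive term (P : Type) : Type :=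
  | TVar of nat
  | TPar of P
  | TZero
  | TInf
  | TAdd of term P & term P
  | TScal of C & term P
  | TVal of term P.

Inductive formula (P : Type) : Type :=
  | FEq of term P & term P
  | FLt0 of term P & term P
  | FLt1 of term P & term P
  | FNot of formula P
  | FAnd of formula P & formula P
  | FExists of nat & formula P.

Definition add_inf (x y : option G) : option G :=
  match x, y with Some x, Some y => Some (x + y) | _, _ => None end.
Definition scal_inf (l : C) (x : option G) : option G :=
  match x with Some x => Some (l *: x) | None => None end.

Fixpoint eval_term P (env : nat -> option G) (pv : P -> option G) (t : term P)
  : option G :=
  match t with
  | TVar n => env n
  | TPar p => pv p
  | TZero => Some 0
  | TInf => None
  | TAdd t1 t2 => add_inf (eval_term env pv t1) (eval_term env pv t2)
  | TScal l t1 => scal_inf l (eval_term env pv t1)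
  | TVal t1 => vinf (eval_term env pv t1)
  end.

Fixpoint sat P (env : nat -> option G) (pv : P -> option G) (f : formula P)
  : Prop :=
  match f with
  | FEq t1 t2 => eval_term env pv t1 = eval_term env pv t2
  | FLt0 t1 t2 => ext_lt lt0 (eval_term env pv t1) (eval_term env pv t2)
  | FLt1 t1 t2 => ext_lt lt1 (eval_term env pv t1) (eval_term env pv t2)
  | FNot f1 => ~ sat env pv f1
  | FAnd f1 f2 => sat env pv f1 /\ sat env pv f2
  | FExists n f1 =>
      exists x : option G, sat (fun k => if k == n then x else env k) pv f1
  end.

Definition seq_env (d : Order.disp_t) (I : orderType d) (a : I -> G) (s : seq I)
  : nat -> option G :=
  fun k => nth None (map (fun i => Some (a i)) s) k.

Definition indiscernible_on (d : Order.disp_t) (I : orderType d) (J : pred I)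
  (a : I -> G) (P : Type) (pv : P -> option G) : Prop :=
  forall (f : formula P) (s t : seq I),
    sorted (fun x y => (x < y)%O) s -> sorted (fun x y => (x < y)%O) t ->
    size s = size t -> all J s -> all J t ->
    (sat (seq_env a s) pv f <-> sat (seq_env a t) pv f).

End Hamel.

(* Main.v *)
Require Import Defs.
From HB Require Import structures.
From mathcomp Require Import all_boot all_order all_algebra.
Import Order.TTheory GRing.Theory Num.Theory.
Local Open Scope ring_scope.
Set Implicit Arguments. Unset Strict Implicit.

Section Helpers.
Variables (C : realFieldType) (G : lmodType C).

Section Ord.
Variable lt : rel G.
Hypothesis Hlt : ordered_vspace lt.

Lemma elt_irr x : ~~ ext_lt lt x x.
Proof. case: Hlt => irr _ _ _ _; case: x => //=. Qed.

Lemma elt_trans x y z : ext_lt lt x y -> ext_lt lt y z -> ext_lt lt x z.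
Proof.
case: Hlt => _ tr _ _ _; case: x => [x|] //; case: y => [y|] //; case: z => [z|] //=.
exact: tr.
Qed.

Lemma elt_total x y : x != y -> ext_lt lt x y || ext_lt lt y x.
Proof.
case: Hlt => _ _ tot _ _; case: x => [x|]; case: y => [y|] //= H.
by apply: tot; apply: contra H => /eqP ->.
Qed.

Lemma ele_lt x y z : ext_le lt x y -> ext_lt lt y z -> ext_lt lt x z.
Proof. by case/orP => [/eqP ->//|]; apply: elt_trans. Qed.

Lemma elt_le x y z : ext_lt lt x y -> ext_le lt y z -> ext_lt lt x z.
Proof. by move=> H; case/orP => [/eqP <-//|]; apply: elt_trans. Qed.

Lemma ele_trans x y z : ext_le lt x y -> ext_le lt y z -> ext_le lt x z.
Proof.
case/orP => [/eqP ->//|H1]; case/orP => [/eqP <-|H2]; rewrite /ext_le ?H1 ?orbT //.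
by rewrite (elt_trans H1 H2) orbT.
Qed.

Lemma ele_antisym x y : ext_le lt x y -> ext_le lt y x -> x = y.
Proof.
case/orP => [/eqP //|H1]; case/orP => [/eqP //|H2].
by have := elt_irr x; rewrite (elt_trans H1 H2).
Qed.

Lemma elt_nle x y : ext_lt lt x y -> ext_le lt y x -> False.
Proof. by move=> H1 H2; have := elt_irr x; rewrite (elt_le H1 H2). Qed.

Lemma lt_tr x y z : lt x y -> lt (x + z) (y + z).
Proof. by case: Hlt => _ _ _ H _; apply: H. Qed.

Lemma lt_neg x y : lt x y -> lt (- y) (- x).
Proof.
move=> H; have := lt_tr (- x - y) H.
have -> : x + (- x - y) = - y by rewrite addrA subrr add0r.
by have -> : y + (- x - y) = - x by rewrite addrC -addrA addNr addr0.
Qed.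

Lemma lt_sub x y z : lt x y -> lt (x - z) (y - z).
Proof. exact: lt_tr. Qed.

Lemma lt_tot x y : x != y -> lt x y || lt y x.
Proof. by case: Hlt => _ _ t _ _; apply: t. Qed.

Lemma lt_irr x : ~~ lt x x.
Proof. by case: Hlt. Qed.

Lemma lt_trans' x y z : lt x y -> lt y z -> lt x z.
Proof. by case: Hlt => _ t _ _ _; apply: t. Qed.
End Ord.

Variables (lt0 lt1 : rel G) (v : G -> option G).
Hypothesis HH : hamel_space lt0 lt1 v.

Lemma O0 : ordered_vspace lt0. Proof. by case: HH. Qed.
Lemma O1 : ordered_vspace lt1. Proof. by case: HH => _ []. Qed.

Lemma vN x : v (- x) = v x.
Proof.
case: HH => _ [_ [_ [_ [Hs _]]]].
by rewrite -scaleN1r Hs // oppr_eq0 oner_eq0.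
Qed.

Lemma vU x y : ext_le lt0 (v x) (v (x + y)) || ext_le lt0 (v y) (v (x + y)).
Proof. by case: HH => _ [_ [_ [H _]]]. Qed.

Lemma vmono x y : lt1 0 x -> lt1 x y -> ext_le lt0 (v y) (v x).
Proof. by case: HH => _ [_ [_ [_ [_ [H _]]]]]; apply: H. Qed.

Lemma v0 : v 0 = None.
Proof. by case: HH => _ [_ [H _]]; exact: (proj2 (H 0) erefl). Qed.

Lemma vNone x : v x = None -> x = 0.
Proof. by case: HH => _ [_ [H _]]; exact: (proj1 (H x)). Qed.

Lemma v_strict x y : ext_lt lt0 (v x) (v y) -> v (x + y) = v x.
Proof.
move=> H.
have H1 : ext_le lt0 (v (x + y)) (v x).
  have := vU (x + y) (- y); rewrite addrK vN.
  by case/orP => // H2; case: (elt_nle O0 H H2).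
case/orP: (vU x y) => H2; first exact: (ele_antisym O0 H1 H2).
by case: (elt_nle O0 (elt_le O0 H H2) H1).
Qed.

Lemma between x y z w : lt1 x z -> lt1 z y -> v x = w -> v y = w ->
  (lt1 0 x <-> lt1 0 y) -> x != 0 -> y != 0 -> ext_le lt0 (v z) w.
Proof.
move=> Hxz Hzy Hx Hy Hs nx ny.
case Hp: (lt1 0 x).
  by rewrite -Hx; apply: vmono.
have Hq : ~~ lt1 0 y by apply/negP => /Hs; rewrite Hp.
have Hy0 : lt1 y 0.
  by have := lt_tot O1 ny; rewrite (negbTE Hq) orbF.
rewrite -Hy -(vN z) -(vN y); apply: vmono.
  by have := lt_neg O1 Hy0; rewrite oppr0.
exact: (lt_neg O1 Hzy).
Qed.

End Helpers.

Theorem lemma5p4 (C : realFieldType) (G : lmodType C)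
  (lt0 lt1 : rel G) (v : G -> option G)
  (HM : ham_model lt0 lt1 v)
  (d : Order.disp_t) (I : orderType d) (c : I)
  (HI1 : forall s : seq I, exists i, (i < c)%O /\ i \notin s)
  (HI2 : forall s : seq I, exists i, (c < i)%O /\ i \notin s)
  (a : I -> G)
  (Hnc : exists i j, a i != a j)
  (Hind : indiscernible_on lt0 lt1 v predT a (fun p : void => match p with end))
  (b : G) (b' : option G) (Hb' : exists x : G, v x = b')
  (Hbind : indiscernible_on lt0 lt1 v (fun i => i != c) a
             (fun p : bool => if p then Some b else b'))
  (Hval : forall i, i != c -> v (a i - b) = b') :
  v (a c - b) = b'.
Proof.
case: HM => HH _ _.
have O0' := O0 HH; have O1' := O1 HH.
have Hdiff : forall i j, a i - a j = (a i - b) + - (a j - b).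
  by move=> i j; rewrite opprB addrA subrK.
have Hge : forall i j, i != c -> j != c -> ext_le lt0 b' (v (a i - a j)).
  move=> i j hi hj; rewrite Hdiff.
  by case/orP: (vU HH (a i - b) (- (a j - b))); rewrite ?(vN HH) Hval.
case: (eqVneq (v (a c - b)) b') => [//|Hne].
exfalso.
case/orP: (elt_total O0' Hne) => Hlt.
- have [p [q [Hpq Hqc]]] : exists p q, (p < q)%O /\ (q < c)%O.
    case: (HI1 [::]) => j1 [h1 _]; case: (HI1 [:: j1]) => j2 [h2 n2].
    rewrite inE in n2.
    case: (ltgtP j1 j2) => h; [by exists j1, j2 | by exists j2, j1 |].
    by rewrite h eqxx in n2.
  case: (HI2 [::]) => k [Hck _].
  have Hpc := lt_trans Hpq Hqc.
  have npc : p != c by rewrite (lt_eqF Hpc).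
  have nqc : q != c by rewrite (lt_eqF Hqc).
  have nkc : k != c by rewrite (gt_eqF Hck).
  pose f := FLt0 (TVal (TAdd (TVar C void 2) (TScal (-1) (TVar C void 0))))
                 (TVal (TAdd (TVar C void 1) (TScal (-1) (TVar C void 0)))).
  have := Hind f [:: p; q; c] [:: p; c; k].
  rewrite /= Hpq Hqc Hpc Hck !scaleN1r => /(_ erefl erefl erefl erefl erefl) [H _].
  have HcP : v (a c - a p) = v (a c - b).
    by rewrite Hdiff (v_strict HH) // (vN HH) (Hval p).
  have Hlt' : ext_lt lt0 (v (a c - a p)) b' by rewrite HcP.
  have H' := H (elt_le O0' Hlt' (Hge q p nqc npc)).
  exact: (elt_nle O0' (elt_trans O0' H' Hlt') (Hge k p nkc npc)).
- case Eb: b' Hlt Hval Hbind Hge => [beta|] Hlt Hval Hbind Hge; last by [].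
  have Hnz : forall i, i != c -> a i - b != 0.
    by move=> i hi; apply/eqP => E; have := Hval i hi; rewrite E (v0 HH).
  case: (HI1 [::]) => i [Hic _]; case: (HI2 [::]) => j [Hcj _].
  have nic : i != c by rewrite (lt_eqF Hic).
  have njc : j != c by rewrite (gt_eqF Hcj).
  pose f2 := FLt1 (TZero C bool) (TAdd (TVar C bool 0) (TScal (-1) (@TPar C bool true))).
  have := Hbind f2 [:: i] [:: j].
  rewrite /= nic njc !scaleN1r => /(_ erefl erefl erefl erefl erefl) Hsign.
  pose f3 := FLt1 (TVar C void 0) (TVar C void 1).
  have := Hind f3 [:: i; c] [:: c; j].
  rewrite /= Hic Hcj => /(_ erefl erefl erefl erefl erefl) Hord.
  apply: (elt_nle O0' Hlt).
  case Hac: (lt1 (a i) (a c)).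
    have Hcj' := (proj1 Hord) Hac.
    apply: (between HH (lt_sub O1' b Hac) (lt_sub O1' b Hcj') (Hval i nic) (Hval j njc)).
    - exact: Hsign.
    - exact: Hnz.
    - exact: Hnz.
  have Hcj' : ~~ lt1 (a c) (a j) by apply/negP => /(proj2 Hord); rewrite Hac.
  case: (eqVneq (a c) (a i)) => [E|nci].
    by rewrite E Hval // /ext_le eqxx.
  case: (eqVneq (a j) (a c)) => [E|njc'].
    by rewrite -E Hval // /ext_le eqxx.
  have Hci : lt1 (a c) (a i) by have := lt_tot O1' nci; rewrite Hac orbF.
  have Hjc : lt1 (a j) (a c) by have := lt_tot O1' njc'; rewrite (negbTE Hcj') orbF.
  apply: (between HH (lt_sub O1' b Hjc) (lt_sub O1' b Hci) (Hval j njc) (Hval i nic)).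
  - by split => /Hsign.
  - exact: Hnz.
  - exact: Hnz.
Qed.
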